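(* Let $\mathcal G$ be the class of all finite connected graphs, with the fixed class of epimorphisms between them being the confluent epimorphisms. Then $\mathcal G$ is a projective Fraïssé class.
   Context: A graph is a pair $A=(V(A),E(A))$ where $E(A)\subseteq V(A)^2$ is a reflexive and symmetric relation; elements of $E(A)$ are edges. A homomorphism $f\colon A\to B$ maps edges to edges; an epimorphism is a homomorphism that is surjective both on vertices and on edges; an isomorphism is an injective epimorphism. A subset $S\subseteq V(A)$ is disconnected if there are nonempty closed subsets $P,Q$ of $S$ with $P\cup Q=S$ such that $\langle a,b\rangle\notin E(A)$ whenever $a\in P$, $b\in Q$; otherwise $S$ is connected; $A$ is connected if $V(A)$ is. The component of $S$ containing $a$ is the union of all connected subsets of $S$ containing $a$. An epimorphism $f\colon A\to B$ is confluent if for every connected $Q\subseteq V(B)$ and every component $C$ of $f^{-1}(Q)$ we have $f(C)=Q$. A class $\mathcal F$ of finite graphs with a fixed class of epimorphisms between its members is a projective Fraïssé class if: (1) $\mathcal F$ contains only countably many members up to isomorphism; (2) the fixed epimorphisms are closed under composition and contain all identity maps; (3) for all $B,C\in\mathcal F$ there are $D\in\mathcal F$ and fixed epimorphisms $D\to B$, $D\to C$; (4) (projective amalgamation) for all $A,B,C\in\mathcal F$ and fixed epimorphisms $f\colon B\to A$, $g\colon C\to A$ there are $D\in\mathcal F$ and fixed epimorphisms $f_0\colon D\to B$, $g_0\colon D\to C$ with $f\circ f_0=g\circ g_0$. *)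

(* Defs.v *)
From mathcomp Require Import all_boot.
Set Implicit Arguments. Unset Strict Implicit. Unset Printing Implicit Defensive.

Record fgraph := FGraph {
  gV :> finType;
  gE : rel gV;
  gE_refl : reflexive gE;
  gE_sym : symmetric gE }.

Section GraphDefs.
Variables A B : fgraph.

Definition homomorphism (f : A -> B) : Prop :=
  forall x y : A, gE x y -> gE (f x) (f y).

Definition epimorphism (f : A -> B) : Prop :=
  [/\ homomorphism f,
      (forall v : B, exists x : A, f x = v) &
      (forall u v : B, gE u v -> exists x y : A, [/\ gE x y, f x = u & f y = v])].

Definition isomorphism (f : A -> B) : Prop := epimorphism f /\ injective f.

End GraphDefs.

Definition isomorphic (A B : fgraph) : Prop := exists f : A -> B, isomorphism f.

Section Connectedness.
Variable A : fgraph.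

(* In a finite graph every subset is closed (discrete topology). *)
Definition disconnectedb (S : {set A}) : bool :=
  [exists P : {set A}, [exists Q : {set A},
     [&& P :|: Q == S, P != set0, Q != set0 &
         [forall a in P, [forall b in Q, ~~ gE a b]]]]].

Definition connectedb (S : {set A}) : bool := ~~ disconnectedb S.

Definition connected_graph : Prop := connectedb [set: A].

Definition component (S : {set A}) (a : A) : {set A} :=
  [set x | [exists C : {set A}, [&& C \subset S, a \in C, connectedb C & x \in C]]].

End Connectedness.

Definition confluent (A B : fgraph) (f : A -> B) : Prop :=
  epimorphism f /\
  forall Q : {set B}, connectedb Q ->
    forall C : {set A}, (exists2 a, a \in f @^-1: Q & C = component (f @^-1: Q) a) ->
      f @: C = Q.

Definition projective_fraisse_class (P : fgraph -> Prop)
    (M : forall A B : fgraph, (A -> B) -> Prop) : Prop :=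
  [/\
      (forall (A B : fgraph) (f : A -> B), P A -> P B -> M A B f -> epimorphism f),
      (exists s : nat -> fgraph, forall A, P A -> exists n, isomorphic (s n) A),
      ((forall (A B C : fgraph) (f : A -> B) (g : B -> C),
          P A -> P B -> P C -> M A B f -> M B C g -> M A C (g \o f)) /\
       (forall A : fgraph, P A -> M A A id)),
      (forall B C : fgraph, P B -> P C ->
         exists D : fgraph, P D /\
           exists (f : D -> B) (g : D -> C), M D B f /\ M D C g) &
      (forall (A B C : fgraph) (f : B -> A) (g : C -> A),
         P A -> P B -> P C -> M B A f -> M C A g ->
         exists D : fgraph, P D /\
           exists (f0 : D -> B) (g0 : D -> C),
             [/\ M D B f0, M D C g0 & forall d : D, f (f0 d) = g (g0 d)])].

(* Main.v *)
Require Import Defs.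
From mathcomp Require Import all_boot.
Set Implicit Arguments. Unset Strict Implicit. Unset Printing Implicit Defensive.

Section Conn.
Variable G : Defs.fgraph.
Implicit Types S X Y C L : {set G}.

Definition closed_in S X := forall u v : G, u \in X -> v \in S -> gE u v -> v \in X.

Lemma conn_intro S :
  (forall X, X \subset S -> X != set0 -> closed_in S X -> S \subset X) -> connectedb S.
Proof.
move=> H; apply/negP => /existsP [P /existsP [Q /and4P [/eqP ePQ nP nQ /forallP hPQ]]].
have sub : P \subset S by rewrite -ePQ subsetUl.
have cl : closed_in S P.
  move=> u v uP vS uv; move: vS; rewrite -ePQ in_setU => /orP [//|vQ].
  move: (hPQ u); rewrite uP /= => /forallP /(_ v); rewrite vQ uv /=.
  by [].
have SP := H P sub nP cl.
case/set0Pn: nQ => q qQ.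
have qP : q \in P by apply: (subsetP SP); rewrite -ePQ in_setU qQ orbT.
by move: (hPQ q); rewrite qP /= => /forallP /(_ q); rewrite qQ gE_refl.
Qed.

Lemma conn_elim S X :
  connectedb S -> X \subset S -> X != set0 -> closed_in S X -> S \subset X.
Proof.
move=> /negP cS XS nX cl; apply/subsetP => v vS; apply/negPn/negP => vX; apply: cS.
apply/existsP; exists X; apply/existsP; exists (S :\: X).
apply/and4P; split => //.
- apply/eqP/setP => x; rewrite !inE; case xX: (x \in X) => //=.
  by rewrite (subsetP XS x xX).
- by apply/set0Pn; exists v; rewrite inE vX vS.
- apply/forallP => a; apply/implyP => aX; apply/forallP => b; apply/implyP.
  rewrite inE => /andP [bX bS]; apply/negP => ab.
  by rewrite (cl a b aX bS ab) in bX.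
Qed.

Lemma closed_sub S S' X : closed_in S X -> S' \subset S -> closed_in S' (X :&: S').
Proof.
move=> cl sub u v; rewrite inE => /andP [uX uS] vS uv.
by rewrite inE vS (cl u v uX (subsetP sub v vS) uv).
Qed.

Lemma conn0 : @connectedb G set0.
Proof. by apply: conn_intro => X; rewrite subset0 => /eqP ->; rewrite eqxx. Qed.

Lemma conn1 (x : G) : connectedb [set x].
Proof.
apply: conn_intro => X XS /set0Pn [y yX] _; apply/subsetP => z; rewrite inE => /eqP ->.
by have := subsetP XS y yX; rewrite inE => /eqP <-.
Qed.

Lemma connU S1 S2 (x1 x2 : G) : connectedb S1 -> connectedb S2 -> x1 \in S1 -> x2 \in S2 ->
  gE x1 x2 -> connectedb (S1 :|: S2).
Proof.
move=> c1 c2 x1S x2S e; apply: conn_intro => X XS nX cl.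
have H1 : X :&: S1 != set0 -> S1 \subset X.
  move=> n; have := conn_elim c1 (subsetIr X S1) n (closed_sub cl (subsetUl S1 S2)).
  by move=> h; apply: (subset_trans h); apply: subsetIl.
have H2 : X :&: S2 != set0 -> S2 \subset X.
  move=> n; have := conn_elim c2 (subsetIr X S2) n (closed_sub cl (subsetUr S1 S2)).
  by move=> h; apply: (subset_trans h); apply: subsetIl.
have H12 : S1 \subset X -> S2 \subset X.
  move=> s; apply: H2; apply/set0Pn; exists x2; rewrite inE x2S andbT.
  by apply: (cl x1 x2 (subsetP s x1 x1S)); rewrite // inE x2S orbT.
have H21 : S2 \subset X -> S1 \subset X.
  move=> s; apply: H1; apply/set0Pn; exists x1; rewrite inE x1S andbT.
  by apply: (cl x2 x1 (subsetP s x2 x2S)); [rewrite inE x1S | rewrite gE_sym].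
case/set0Pn: nX => y yX; have := subsetP XS y yX; rewrite inE => /orP [yS|yS].
- have s1 : S1 \subset X by apply: H1; apply/set0Pn; exists y; rewrite inE yX yS.
  by rewrite subUset s1 H12.
- have s2 : S2 \subset X by apply: H2; apply/set0Pn; exists y; rewrite inE yX yS.
  by rewrite subUset s2 H21.
Qed.





Lemma comp_sub S (a : G) : component S a \subset S.
Proof.
apply/subsetP => x; rewrite inE => /existsP [C /and4P [CS _ _ xC]].
exact: subsetP CS x xC.
Qed.

Lemma comp_max S (a : G) C : C \subset S -> a \in C -> connectedb C -> C \subset component S a.
Proof.
move=> CS aC cC; apply/subsetP => x xC; rewrite inE; apply/existsP; exists C.
by rewrite CS aC cC xC.
Qed.

Lemma comp_self S (a : G) : a \in S -> a \in component S a.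
Proof.
move=> aS; apply: (subsetP (comp_max (C := [set a]) _ _ _)); rewrite ?inE ?sub1set //.
exact: conn1.
Qed.

Lemma comp_conn S (a : G) : connectedb (component S a).
Proof.
apply: conn_intro => X XS nX cl.
have key : forall C, C \subset S -> a \in C -> connectedb C -> X :&: C != set0 -> C \subset X.
  move=> C CS aC cC n.
  have h := conn_elim cC (subsetIr X C) n (closed_sub cl (comp_max CS aC cC)).
  by apply: (subset_trans h); apply: subsetIl.
case/set0Pn: nX => x0 x0X.
have := subsetP XS x0 x0X; rewrite inE => /existsP [C0 /and4P [C0S aC0 cC0 x0C0]].
have aX : a \in X.
  apply: (subsetP (key C0 C0S aC0 cC0 _)) => //.
  by apply/set0Pn; exists x0; rewrite inE x0X.
apply/subsetP => y; rewrite inE => /existsP [C /and4P [CS aC cC yC]].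
apply: (subsetP (key C CS aC cC _)) => //.
by apply/set0Pn; exists a; rewrite inE aX.
Qed.

Lemma comp_absorb S (a : G) L (y : G) : connectedb L -> L \subset S -> y \in L ->
  y \in component S a -> L \subset component S a.
Proof.
move=> cL LS yL; rewrite inE => /existsP [C /and4P [CS aC cC yC]].
have h : L :|: C \subset component S a.
  apply: comp_max; first by rewrite subUset LS.
    by rewrite inE aC orbT.
  exact: connU cL cC yL yC (gE_refl y).
by apply: subset_trans h; apply: subsetUl.
Qed.

End Conn.

Lemma conn_image (G H : Defs.fgraph) (f : G -> H) (S : {set G}) : connectedb S ->
  {in S &, forall u v, gE u v -> gE (f u) (f v)} -> connectedb (f @: S).
Proof.
move=> cS hom; apply: conn_intro => X XS nX cl.
have : S \subset S :&: f @^-1: X.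
  apply: conn_elim => //; first exact: subsetIl.
  - case/set0Pn: nX => y yX; have := subsetP XS y yX; case/imsetP => s sS ey.
    by apply/set0Pn; exists s; rewrite !inE sS -ey yX.
  - move=> u v; rewrite !inE => /andP [uS uX] vS uv; rewrite vS /=.
    by apply: (cl (f u) (f v) uX); [apply: imset_f | apply: hom].
move=> sub; apply/subsetP => y /imsetP [s sS ->].
by have := subsetP sub s sS; rewrite !inE => /andP [_].
Qed.

Lemma inpre (T U : finType) (f : T -> U) (D : {set U}) x : (x \in f @^-1: D) = (f x \in D).
Proof. by rewrite inE. Qed.

Definition wconf (A B : Defs.fgraph) (f : A -> B) :=
  forall Q : {set B}, connectedb Q -> forall a : A, f a \in Q ->
    f @: component (f @^-1: Q) a = Q.

Lemma W_sub (A B : Defs.fgraph) (f : A -> B) (Q : {set B}) (a : A) :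
  f @: component (f @^-1: Q) a \subset Q.
Proof.
apply/subsetP => y /imsetP [x xK ->].
by have := subsetP (comp_sub (f @^-1: Q) a) x xK; rewrite inE.
Qed.

Lemma confluent_W (A B : Defs.fgraph) (f : A -> B) : confluent f -> wconf f.
Proof.
case=> _ H Q cQ a aQ; apply: H => //; exists a => //; by rewrite inE.
Qed.

Lemma W_confluent (A B : Defs.fgraph) (f : A -> B) :
  0 < #|A| -> connected_graph B -> homomorphism f -> wconf f -> confluent f.
Proof.
move=> /card_gt0P [a0 _] cB hf W.
have vs : forall v : B, exists x : A, f x = v.
  move=> v; have := W [set: B] cB a0 (in_setT _).
  move/setP/(_ v); rewrite in_setT => /imsetP [x _ ->]; by exists x.
split; last first.
  move=> Q cQ C [a aQ ->]; apply: W => //; by rewrite inE in aQ.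
split => // u v uv.
case: (vs u) => a fa.
have cQ : connectedb [set u; v].
  by apply: (connU (conn1 u) (conn1 v) _ _ uv); rewrite inE.
have aQ : f a \in [set u; v] by rewrite fa !inE eqxx.
have img := W _ cQ a aQ.
set K := component _ a in img.
have cK : connectedb K := comp_conn _ _.
have aK : a \in K by apply: comp_self; rewrite inE.
have KQ : forall x, x \in K -> f x \in [set u; v].
  by move=> x xK; have := subsetP (comp_sub (f @^-1: [set u; v]) a) x xK; rewrite inE.
case: (eqVneq u v) => [<-|nuv]; first by exists a, a; rewrite gE_refl fa.
set X := K :&: f @^-1: [set u].
case: (boolP [exists x in X, exists y in K, gE x y && (y \notin X)]).
  case/existsP => x /andP [xX /existsP [y /and3P [yK xy yX]]].
  move: xX yX; rewrite /X !in_setI yK /= => /andP [xK]; rewrite !inE => fx fy.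
  exists x, y; split => //; first by apply/eqP.
  by have := KQ y yK; rewrite !inE (negbTE fy) /= => /eqP.
move=> ncl; exfalso.
have cl : closed_in K X.
  move=> x y xX yK xy; apply/negPn/negP => yX; move/negP: ncl; apply.
  by apply/existsP; exists x; rewrite xX /=; apply/existsP; exists y; rewrite yK xy yX.
have sub := conn_elim cK (subsetIl _ _) _ cl.
have : v \in f @: K by rewrite img !inE eqxx orbT.
case/imsetP => y yK fy.
have : y \in X.
  apply: (subsetP (sub _)) => //; apply/set0Pn; exists a; by rewrite /X in_setI aK /= !inE fa eqxx.
by rewrite /X in_setI !inE -fy => /andP [_ /eqP e]; rewrite e eqxx in nuv.
Qed.

Lemma W_id (A : Defs.fgraph) : wconf (@id A).
Proof.
move=> Q cQ a aQ; apply/eqP; rewrite eqEsubset W_sub /=.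
apply/subsetP => x xQ; apply/imsetP; exists x => //.
apply: (subsetP (comp_max _ _ cQ)) => //.
by apply/subsetP => y yQ; rewrite inE.
Qed.

Lemma W_comp (A B C : Defs.fgraph) (f : A -> B) (g : B -> C) :
  homomorphism f -> wconf f -> wconf g -> wconf (g \o f).
Proof.
move=> hf Wf Wg Q cQ a aQ.
set K := component _ a.
set L := component (g @^-1: Q) (f a).
have cL : connectedb L := comp_conn _ _.
have faL : f a \in L by apply: comp_self; rewrite inE.
have LQ : L \subset g @^-1: Q := comp_sub _ _.
have aK : a \in K by apply: comp_self; rewrite inE.
have -> : K = component (f @^-1: L) a.
  apply/eqP; rewrite eqEsubset; apply/andP; split.
    apply: comp_max => //; last exact: comp_conn.
    apply/subsetP => x xK; rewrite inE.
    have sub : f @: K \subset L.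
      apply: comp_max; last by apply: conn_image; [exact: comp_conn| move=> u v _ _; apply: hf].
        apply/subsetP => y /imsetP [x' x'K ->].
        by have := subsetP (comp_sub _ _) x' x'K; rewrite !inE.
      exact: imset_f.
    by apply: (subsetP sub); apply: imset_f.
  apply: comp_max; last exact: comp_conn.
    apply/subsetP => x xK; have := subsetP (comp_sub _ _) x xK; rewrite !inpre => xL.
    by have := subsetP LQ _ xL; rewrite !inpre.
  by apply: comp_self; rewrite inE.
rewrite imset_comp (Wf L cL a faL); apply: Wg => //.
Qed.

Definition ptE (x y : unit) := true.
Lemma ptE_refl : reflexive ptE. Proof. by []. Qed.
Lemma ptE_sym : symmetric ptE. Proof. by []. Qed.
Definition pt_graph : Defs.fgraph := FGraph ptE_refl ptE_sym.

Lemma pt_P : 0 < #|pt_graph| /\ connected_graph pt_graph.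
Proof.
split; first by apply/card_gt0P; exists tt.
apply: conn_intro => X _ /set0Pn [y yX] _; apply/subsetP => z _.
by case: z; case: y yX.
Qed.

Lemma W_const (A : Defs.fgraph) : wconf (fun _ : A => (tt : pt_graph)).
Proof.
move=> Q cQ a aQ; apply/eqP; rewrite eqEsubset W_sub /=.
apply/subsetP => x xQ; case: x xQ => _; apply/imsetP; exists a => //.
by apply: comp_self; rewrite inE.
Qed.

Lemma const_confluent (A : Defs.fgraph) : 0 < #|A| ->
  confluent (fun _ : A => (tt : pt_graph)).
Proof.
move=> nA; apply: W_confluent => //; first by case: pt_P.
exact: W_const.
Qed.

Section Sub.
Variables (G : Defs.fgraph) (S : {set G}).
Definition subT := {x : G | x \in S}.
Definition subE (x y : subT) := gE (val x) (val y).
Lemma subE_refl : reflexive subE. Proof. by move=> x; apply: gE_refl. Qed.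
Lemma subE_sym : symmetric subE. Proof. by move=> x y; apply: gE_sym. Qed.
Definition sub_graph : Defs.fgraph := FGraph subE_refl subE_sym.

Lemma conn_sub_of (T : {set sub_graph}) : connectedb (val @: T) -> connectedb T.
Proof.
case: (set_0Vmem T) => [->|[t0 t0T]] c; first exact: conn0.
have -> : T = (insubd t0) @: (val @: T).
  by rewrite -imset_comp (eq_imset _ (valKd t0)) imset_id.
apply: conn_image => // u v /imsetP [x _ ->] /imsetP [y _ ->] e.
by rewrite /= /subE !valKd.
Qed.

Lemma conn_val (T : {set sub_graph}) : connectedb T -> connectedb (val @: T).
Proof. move=> c; apply: (@conn_image sub_graph G val T c) => u v _ _ e; exact: e. Qed.
End Sub.

Lemma W_restrict (G B : Defs.fgraph) (f : G -> B) (x0 : G) :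
  wconf f -> wconf (fun t : sub_graph (component [set: G] x0) => f (val t)).
Proof.
move=> Wf Q cQ a aQ.
set K := component [set: G] x0.
set f0 := (fun t : sub_graph K => f (val t)).
set Kd := component (f0 @^-1: Q) a.
set L := component (f @^-1: Q) (val a).
have aKd : a \in Kd by apply: comp_self; rewrite inpre.
have vaL : val a \in L by apply: comp_self; rewrite inpre.
have cL : connectedb L := comp_conn _ _.
have LK : L \subset K.
  apply: (comp_absorb cL (subsetT _) vaL); exact: (valP a).
have e : val @: Kd = L.
  apply/eqP; rewrite eqEsubset; apply/andP; split.
    apply: comp_max; last by apply: conn_val; exact: comp_conn.
      apply/subsetP => y /imsetP [t tK ->]; have := subsetP (@comp_sub (sub_graph K) _ _) t tK.
      by rewrite !inpre.
    exact: imset_f.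
  set T' := [set t : sub_graph K | val t \in L].
  have eT : val @: T' = L.
    apply/eqP; rewrite eqEsubset; apply/andP; split.
      by apply/subsetP => y /imsetP [t]; rewrite inE => tL ->.
    apply/subsetP => y yL; have yK := subsetP LK y yL.
    apply/imsetP; exists (Sub y yK : sub_graph K); last by rewrite SubK.
    by rewrite inE SubK.
  have cT : connectedb T' by apply: conn_sub_of; rewrite eT.
  have sub : T' \subset Kd.
    apply: comp_max => //; last by rewrite inE.
    apply/subsetP => t; rewrite inE => tL; rewrite inpre /f0.
    by have := subsetP (comp_sub _ _) _ tL; rewrite inpre.
  by rewrite -eT; apply: imsetS.
have -> : f0 = f \o val by [].
by rewrite imset_comp e; apply: Wf.
Qed.

Lemma sub_comp_P (G : Defs.fgraph) (x0 : G) :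
  0 < #|sub_graph (component [set: G] x0)| /\
  connected_graph (sub_graph (component [set: G] x0)).
Proof.
have x0K : x0 \in component [set: G] x0 by apply: comp_self; rewrite inE.
split; first by apply/card_gt0P; exists (Sub x0 x0K).
apply: conn_sub_of.
have -> : val @: [set: sub_graph (component [set: G] x0)] = component [set: G] x0.
  apply/eqP; rewrite eqEsubset; apply/andP; split.
    by apply/subsetP => y /imsetP [t _ ->]; exact: (valP t).
  by apply/subsetP => y yK; apply/imsetP; exists (Sub y yK).
exact: comp_conn.
Qed.

Section Pb.
Variables (A B C : Defs.fgraph) (f : B -> A) (g : C -> A).
Definition pbT := {x : B * C | f x.1 == g x.2}.
Definition pbE (x y : pbT) := gE (val x).1 (val y).1 && gE (val x).2 (val y).2.
Lemma pbE_refl : reflexive pbE. Proof. by move=> x; rewrite /pbE !gE_refl. Qed.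
Lemma pbE_sym : symmetric pbE.
Proof. by move=> x y; rewrite /pbE gE_sym (gE_sym (val x).2). Qed.
Definition pb_graph : Defs.fgraph := FGraph pbE_refl pbE_sym.
Definition p1 (x : pb_graph) : B := (val x).1.
Definition p2 (x : pb_graph) : C := (val x).2.

Lemma p1_hom : homomorphism p1.
Proof. by move=> x y /andP []. Qed.
Lemma p2_hom : homomorphism p2.
Proof. by move=> x y /andP []. Qed.

Hypotheses (hf : homomorphism f) (hg : homomorphism g).

Lemma W_p1 : wconf g -> wconf p1.
Proof.
move=> Wg Q cQ a aQ.
set L := component (p1 @^-1: Q) a.
have aL : a \in L by apply: comp_self; rewrite inpre.
have LQ : forall t, t \in L -> p1 t \in Q.
  by move=> t tL; have := subsetP (comp_sub _ _) t tL; rewrite inpre.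
apply/eqP; rewrite eqEsubset W_sub /=.
apply: conn_elim => //.
- exact: (@W_sub pb_graph _ p1 Q a).
- by apply/set0Pn; exists (p1 a); apply: imset_f.
move=> u v /imsetP [t tL ->] vQ uv.
set c := p2 t.
have ftc : f (p1 t) = g c by apply/eqP; exact: (valP t).
set R := [set f (p1 t); f v].
have cR : connectedb R.
  by apply: (connU (conn1 _) (conn1 _) _ _ (hf uv)); rewrite inE.
have cRR : g c \in R by rewrite !inE -ftc eqxx.
set M := component (g @^-1: R) c.
have cM : c \in M by apply: comp_self; rewrite inpre.
have MR : forall x, x \in M -> g x \in R.
  by move=> x xM; have := subsetP (comp_sub _ _) x xM; rewrite inpre.
have : f v \in g @: M by rewrite (Wg R cR c cRR) !inE eqxx orbT.
case/imsetP => c' c'M fvc'.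
pose hp (x : C) := if g x == f v then (v, x) else (p1 t, x).
pose h (x : C) : pb_graph := insubd t (hp x).
have hval : forall x, x \in M -> val (h x) = hp x.
  move=> x xM; rewrite /h insubdK //= /hp unfold_in.
  case: ifP => [/eqP e|ne] /=; first by rewrite e eqxx.
  by have := MR x xM; rewrite !inE ne orbF => /eqP ->; rewrite eqxx.
have cHM : connectedb (h @: M).
  apply: conn_image; first exact: comp_conn.
  move=> x y xM yM xy; rewrite /= /pbE !hval // /hp /=.
  case: ifP => _; case: ifP => _ /=; rewrite xy andbT //.
  - exact: gE_refl.
  - by rewrite gE_sym.
  - exact: gE_refl.
have tv : val t = (p1 t, c) by rewrite /p1 /c /p2; case: (val t).
have cLH : connectedb (L :|: h @: M).
  apply: (connU (comp_conn _ _) cHM tL (imset_f h cM)).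
  by rewrite /= /pbE hval // tv /hp /=; case: ifP => _ /=; rewrite ?gE_refl ?uv.
have sub : L :|: h @: M \subset L.
  apply: comp_max; last exact: cLH; last by rewrite inE aL.
  rewrite subUset comp_sub /=; apply/subsetP => y /imsetP [x xM ->].
  rewrite inpre /p1 hval // /hp; case: ifP => _ //=.
  exact: LQ.
have hc'L : h c' \in L by apply: (subsetP sub); rewrite inE imset_f ?orbT.
apply/imsetP; exists (h c') => //.
by rewrite /p1 hval // /hp -fvc' eqxx.
Qed.

Lemma W_p2 : wconf f -> wconf p2.
Proof.
move=> Wf Q cQ a aQ.
set L := component (p2 @^-1: Q) a.
have aL : a \in L by apply: comp_self; rewrite inpre.
have LQ : forall t, t \in L -> p2 t \in Q.
  by move=> t tL; have := subsetP (comp_sub _ _) t tL; rewrite inpre.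
apply/eqP; rewrite eqEsubset W_sub /=.
apply: conn_elim => //.
- exact: (@W_sub pb_graph _ p2 Q a).
- by apply/set0Pn; exists (p2 a); apply: imset_f.
move=> u v /imsetP [t tL ->] vQ uv.
set b := p1 t.
have ftc : g (p2 t) = f b by apply/esym/eqP; exact: (valP t).
set R := [set g (p2 t); g v].
have cR : connectedb R.
  by apply: (connU (conn1 _) (conn1 _) _ _ (hg uv)); rewrite inE.
have cRR : f b \in R by rewrite !inE -ftc eqxx.
set M := component (f @^-1: R) b.
have cM : b \in M by apply: comp_self; rewrite inpre.
have MR : forall x, x \in M -> f x \in R.
  by move=> x xM; have := subsetP (comp_sub _ _) x xM; rewrite inpre.
have : g v \in f @: M by rewrite (Wf R cR b cRR) !inE eqxx orbT.
case/imsetP => c' c'M fvc'.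
pose hp (x : B) := if f x == g v then (x, v) else (x, p2 t).
pose h (x : B) : pb_graph := insubd t (hp x).
have hval : forall x, x \in M -> val (h x) = hp x.
  move=> x xM; rewrite /h insubdK //= /hp unfold_in.
  case: ifP => [/eqP e|ne] /=; first by rewrite e eqxx.
  by have := MR x xM; rewrite !inE ne orbF => /eqP ->; rewrite eqxx.
have cHM : connectedb (h @: M).
  apply: conn_image; first exact: comp_conn.
  move=> x y xM yM xy; rewrite /= /pbE !hval // /hp /=.
  case: ifP => _; case: ifP => _ /=; rewrite xy //=.
  - exact: gE_refl.
  - by rewrite gE_sym.
  - exact: gE_refl.
have tv : val t = (b, p2 t) by rewrite /b /p1 /p2; case: (val t).
have cLH : connectedb (L :|: h @: M).
  apply: (connU (comp_conn _ _) cHM tL (imset_f h cM)).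
  by rewrite /= /pbE hval // tv /hp /=; case: ifP => _ /=; rewrite ?gE_refl ?uv.
have sub : L :|: h @: M \subset L.
  apply: comp_max; last exact: cLH; last by rewrite inE aL.
  rewrite subUset comp_sub /=; apply/subsetP => y /imsetP [x xM ->].
  rewrite inpre /p2 hval // /hp; case: ifP => _ //=.
  exact: LQ.
have hc'L : h c' \in L by apply: (subsetP sub); rewrite inE imset_f ?orbT.
apply/imsetP; exists (h c') => //.
by rewrite /p2 hval // /hp -fvc' eqxx.
Qed.
End Pb.

Definition code := {n : nat & {ffun 'I_n * 'I_n -> bool}}.
Definition cE (n : nat) (r : {ffun 'I_n * 'I_n -> bool}) (x y : 'I_n) :=
  [|| x == y, r (x, y) | r (y, x)].
Lemma cE_refl n r : reflexive (@cE n r). Proof. by move=> x; rewrite /cE eqxx. Qed.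
Lemma cE_sym n r : symmetric (@cE n r).
Proof. by move=> x y; rewrite /cE eq_sym; case: (r (x, y)); case: (r (y, x)); rewrite ?orbT. Qed.
Definition graph_of (c : code) : Defs.fgraph := FGraph (@cE_refl _ (tagged c)) (@cE_sym _ (tagged c)).
Definition enum_graph (k : nat) : Defs.fgraph :=
  if unpickle k is Some c then graph_of c else pt_graph.

Lemma enum_graph_pickle c : enum_graph (pickle c) = graph_of c.
Proof. by rewrite /enum_graph pickleK. Qed.

Lemma countable_graphs (A : Defs.fgraph) : exists n, isomorphic (enum_graph n) A.
Proof.
pose r := [ffun p : 'I_#|A| * 'I_#|A| => gE (enum_val p.1) (enum_val p.2)].
exists (pickle (Tagged (fun n => {ffun 'I_n * 'I_n -> bool}) r)).
rewrite enum_graph_pickle.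
exists (@enum_val A predT); split; last exact: enum_val_inj.
split.
- move=> x y; rewrite /= /cE /= !ffunE /= => /orP [/eqP -> | /orP [//|]].
    exact: gE_refl.
  by rewrite gE_sym.
- by move=> v; exists (enum_rank v); rewrite enum_rankK.
- move=> u v uv; exists (enum_rank u), (enum_rank v); rewrite !enum_rankK; split => //.
  by rewrite /= /cE /= ffunE /= !enum_rankK uv orbT.
Qed.

Lemma amalg (A B C : Defs.fgraph) (f : B -> A) (g : C -> A) :
  0 < #|A| /\ connected_graph A -> 0 < #|B| /\ connected_graph B ->
  0 < #|C| /\ connected_graph C -> confluent f -> confluent g ->
  exists D : Defs.fgraph, (0 < #|D| /\ connected_graph D) /\
    exists (f0 : D -> B) (g0 : D -> C),
      [/\ confluent f0, confluent g0 & forall d : D, f (f0 d) = g (g0 d)].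
Proof.
move=> _ [nB cB] [nC cC] cf cg.
have [[hf _ _] _] := cf; have [[hg sg _] _] := cg.
case/card_gt0P: nB => b0 _.
case: (sg (f b0)) => c0 e0.
have p0 : f (b0, c0).1 == g (b0, c0).2 by rewrite /= e0.
pose x0 : pb_graph f g := Sub (b0, c0) p0.
pose D := sub_graph (component [set: pb_graph f g] x0).
have PD := sub_comp_P x0.
exists D; split => //.
exists (fun d : D => p1 (val d)), (fun d : D => p2 (val d)); split.
- apply: W_confluent => //; first by case: PD.
    by move=> x y xy; apply: p1_hom.
  apply: W_restrict; apply: W_p1 => //; exact: confluent_W.
- apply: W_confluent => //; first by case: PD.
    by move=> x y xy; apply: p2_hom.
  apply: W_restrict; apply: W_p2 => //; exact: confluent_W.
- by move=> d; apply/eqP; exact: (valP (val d)).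
Qed.

Theorem mainTheorem1 :
  projective_fraisse_class (fun G => 0 < #|G| /\ connected_graph G) confluent.
Proof.
split.
- by move=> A B f _ _ [].
- exists enum_graph => A _; exact: countable_graphs.
- split.
    move=> A B C f g [nA _] _ [_ cC] cf cg.
    have [[hf _ _] _] := cf; have [[hg _ _] _] := cg.
    apply: W_confluent => //.
      by move=> x y xy; apply: hg; apply: hf.
    by apply: W_comp => //; apply: confluent_W.
  move=> A [nA cA]; apply: W_confluent => //; last exact: W_id.
- move=> B C PB PC.
  have [D [PD [f0 [g0 [c1 c2 _]]]]] :=
    amalg pt_P PB PC (const_confluent (proj1 PB)) (const_confluent (proj1 PC)).
  by exists D; split => //; exists f0, g0.
- move=> A B C f g PA PB PC cf cg; exact: amalg.
Qed.
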